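(* Let $(E_n)_{n\ge1}$ be Banach spaces with norms $|\cdot|_n$; for each $n$ let $U_n(t)$ be a strongly continuous group of isometries on $E_n$, and let $L_{n,n+1}:E_{n+1}\to E_n$ be bounded linear operators with $\|L_{n,n+1}\|_{\mathcal{L}(E_{n+1},E_n)}\le Cn$ for all $n\ge1$, for some constant $C>0$. Let $t^*>0$ and let $u_n\in C^1([0,t^*],E_n)$, $n\ge1$, satisfy $$\dot u_n(t)=U_n(t)L_{n,n+1}U_{n+1}(-t)u_{n+1}(t),\qquad u_n(0)=0,\qquad n\ge1.$$ Assume there exists $R>0$ with $\sup_{0\le t\le t^*}|u_n(t)|_n\le R^n$ for all $n\ge1$. Then $u_n(t)=0$ for all $t\in[0,t^*]$ and all $n\ge1$. *)

(* Defs.v *)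
From HB Require Import structures.
From mathcomp Require Import all_boot all_order all_algebra.
From mathcomp Require Import all_classical all_reals all_analysis.
Set Implicit Arguments. Unset Strict Implicit. Unset Printing Implicit Defensive.
Import Order.TTheory GRing.Theory Num.Theory.
Import numFieldNormedType.Exports.
Local Open Scope classical_set_scope.
Local Open Scope ring_scope.

Definition is_deriv_on {R : realType} {V : normedModType R} (a b : R)
  (f f' : R -> V) : Prop :=
  forall t : R, a <= t <= b ->
    (fun h : R => h^-1 *: (f (t + h) - f t))
      @ within [set h : R | h != 0 /\ a <= t + h <= b] (nbhs (0 : R))
      --> f' t.

Definition is_C1_on {R : realType} {V : normedModType R} (a b : R)
  (f f' : R -> V) : Prop :=
  is_deriv_on a b f f' /\ {within `[a, b], continuous f'}.

Definition sc_isometry_group {R : realType} {V : normedModType R}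
  (U : R -> {linear V -> V}) : Prop :=
  [/\ forall x, U 0 x = x,
      forall s t x, U (s + t) x = U s (U t x),
      forall t x, `|U t x| = `|x| &
      forall x, continuous (fun t => U t x)].

(* Main.v *)
Require Import Defs.
From HB Require Import structures.
From mathcomp Require Import all_boot all_order all_algebra.
From mathcomp Require Import all_classical all_reals all_analysis.
From mathcomp Require Import lra ring.
Import Order.TTheory GRing.Theory Num.Theory.
Import numFieldNormedType.Exports.
Local Open Scope classical_set_scope.
Local Open Scope ring_scope.

Section S.
Variables (R : realType) (V : normedModType R).

Lemma deriv_approx (a b : R) (f f' : R -> V) : is_deriv_on a b f f' ->
  forall t, a <= t <= b -> forall e, 0 < e -> exists2 d, 0 < d &
   forall h, h != 0 -> a <= t + h <= b -> `|h| < d ->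
     `|f (t+h) - f t - h *: f' t| <= e * `|h|.
Proof.
move=> D t ht e e0.
have := D t ht; move/cvgrPdist_le => /(_ e e0).
rewrite /within /=. 
move=> /nbhs_ballP [d d0 H].
exists d => // h h0 hab hd.
have := H h; rewrite -ball_normE /ball_ /= sub0r normrN => /(_ hd (conj h0 hab)).
have -> : f (t + h) - f t - h *: f' t = - (h *: (f' t - h^-1 *: (f (t + h) - f t))).
  by rewrite scalerBr scalerA divff // scale1r opprB.
rewrite normrN normrZ mulrC => He.
by rewrite ler_wpM2r.
Qed.

Lemma right_approx (A B a b : R) (f f' : R -> V) : is_deriv_on A B f f' ->
  A <= a -> b <= B ->
  forall t, a <= t < b -> forall e, 0 < e -> exists2 d, 0 < d &
   forall h, 0 < h -> h < d -> t + h <= b ->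
     `|f (t+h) - f t - h *: f' t| <= e * h.
Proof.
move=> D Aa bB t /andP[hat tb] e e0.
have Ht : A <= t <= B by apply/andP; split; lra.
have [d d0 H] := @deriv_approx A B f f' D t Ht e e0.
exists d => // h h0 hd thb.
have := H h; rewrite gtr0_norm //; apply => //; first by rewrite gt_eqF.
by apply/andP; split; lra.
Qed.

Lemma left_cont (A B a b : R) (f f' : R -> V) : is_deriv_on A B f f' ->
  A <= a -> b <= B ->
  forall t, a < t <= b -> forall e, 0 < e -> exists2 d, 0 < d &
   forall h, 0 < h -> h < d -> a <= t - h -> `|f (t - h) - f t| <= e.
Proof.
move=> D Aa bB t /andP[hat tb] e e0.
have Ht : A <= t <= B by apply/andP; split; lra.
have [d d0 H] := @deriv_approx A B f f' D t Ht 1 ltr01.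
set M := 1 + `|f' t|.
have M0 : 0 < M by rewrite /M; have := normr_ge0 (f' t); lra.
exists (Num.min d (e / M)).
  by rewrite lt_min d0 divr_gt0.
move=> h h0; rewrite lt_min => /andP[hd heM] ath.
have := H (- h); rewrite normrN gtr0_norm // mul1r => /(_ _ _ hd).
rewrite oppr_eq0 gt_eqF // => /(_ isT).
have ht : A <= t + - h <= B by apply/andP; split; lra.
move=> /(_ ht) Hh.
have : `|f (t - h) - f t| <= h * M.
  have -> : f (t - h) - f t = (f (t + - h) - f t - (- h) *: f' t) + (- h) *: f' t.
    by rewrite subrK.
  apply: (le_trans (ler_normD _ _)).
  rewrite normrZ normrN gtr0_norm // /M mulrDr mulr1.
  by rewrite lerD2r.
move=> H1; apply: (le_trans H1).
by rewrite -ler_pdivlMr // ltW.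
Qed.

Lemma cmp_aux (A B a b : R) (f f' : R -> V) (phi psi : R -> R) :
  is_deriv_on A B f f' -> A <= a -> a <= b -> b <= B ->
  (forall t, a <= t < b -> `|f' t| <= psi t) ->
  (forall t h, a <= t < b -> 0 <= h -> t + h <= b -> psi t * h <= phi (t+h) - phi t) ->
  forall eps, 0 < eps -> `|f b - f a| <= phi b - phi a + eps * (b - a).
Proof.
move=> D Aa ab bB Hpsi Hphi eps eps0.
have mono : forall s s', a <= s -> s <= s' -> s' <= b -> phi s <= phi s'.
  move=> s s' as1 ss' s'b.
  have [sb|] := ltP s b.
    have p0 : 0 <= psi s by apply: le_trans (Hpsi s _); rewrite ?as1 //.
    have := Hphi s (s' - s) ltac:(by rewrite as1 sb) ltac:(by rewrite subr_ge0).
    rewrite (_ : s + (s' - s) = s'); last by rewrite addrC subrK.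
    move=> /(_ s'b).
    have : 0 <= psi s * (s' - s) by rewrite mulr_ge0 // subr_ge0.
    lra.
  move=> bs; have -> : s' = s by lra.
  by [].
pose P s := `|f s - f a| <= phi s - phi a + eps * (s - a).
pose S := [set t | a <= t <= b /\ forall s, a <= s <= t -> P s].
have Pa : P a by rewrite /P !subrr normr0 mulr0 addr0.
have Sa : S a.
  split; first by rewrite lexx ab.
  by move=> s /andP[h1 h2]; have -> : s = a by lra.
have supS : has_sup S.
  split; first by exists a.
  by exists b => t [/andP[_ ->]].
set c := sup S.
have ac : a <= c by apply: sup_upper_bound.
have cb : c <= b by apply: ge_sup; [exists a | move=> t [/andP[_ ->]]].
have below : forall s, a <= s < c -> P s.
  move=> s /andP[as1 sc].
  have [e [_ He] ce] := sup_adherent (eps:=c - s) ltac:(by rewrite subr_gt0) supS.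
  by apply: He; rewrite as1 /=; move: ce; rewrite /c; lra.
have Pc : P c.
  have [ca|ac'] := eqVneq c a; first by rewrite ca.
  have ac2 : a < c by rewrite lt_neqAle eq_sym ac' ac.
  rewrite /P; apply/ler_addgt0Pr => eta eta0.
  have [d d0 Hd] := @left_cont A B a b f f' D Aa bB c ltac:(by rewrite ac2 cb) eta eta0.
  pose h := Num.min (d / 2) (c - a).
  have h0 : 0 < h by rewrite lt_min divr_gt0 // subr_gt0 ac2.
  have hd : h < d by rewrite /h gt_min; apply/orP; left; lra.
  have hca : h <= c - a by rewrite /h ge_min lexx orbT.
  have Hc := Hd h h0 hd ltac:(lra).
  have Ps := below (c - h) ltac:(apply/andP; split; lra).
  have ms := mono (c - h) c ltac:(lra) ltac:(lra) cb.
  move: Ps; rewrite /P => Ps.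
  have := ler_normD (f c - f (c - h)) (f (c - h) - f a).
  rewrite -distrC in Hc.
  have -> : f c - f (c - h) + (f (c - h) - f a) = f c - f a.
    by rewrite addrA subrK.
  have : eps * (c - h - a) <= eps * (c - a).
    apply: ler_wpM2l; first exact: ltW.
    lra.
  lra.
have Sc : S c.
  split; first by rewrite ac cb.
  move=> s /andP[as1 sc].
  have [sc'|] := ltP s c; first by apply: below; rewrite as1 sc'.
  by move=> cs; have -> : s = c by lra.
have cb' : c = b.
  apply/eqP; rewrite eq_le cb /=; rewrite leNgt; apply/negP => cb2.
  have [d d0 Hd] := @right_approx A B a b f f' D Aa bB c ltac:(by rewrite ac cb2) eps eps0.
  pose h := Num.min (d / 2) (b - c).
  have h0 : 0 < h by rewrite lt_min divr_gt0 // subr_gt0 cb2.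
  have hd : h < d by rewrite /h gt_min; apply/orP; left; lra.
  have hbc : h <= b - c by rewrite /h ge_min lexx orbT.
  have : S (c + h).
    split; first by apply/andP; split; lra.
    move=> s /andP[as1 sch].
    have [sc'|cs] := leP s c; first by case: Sc => _; apply; rewrite as1 sc'.
    pose h' := s - c.
    have h'0 : 0 < h' by rewrite /h' subr_gt0.
    have Hs := Hd h' h'0 ltac:(rewrite /h'; lra) ltac:(rewrite /h'; lra).
    have Hp := Hphi c h' ltac:(apply/andP; split; lra) (ltW h'0) ltac:(rewrite /h'; lra).
    have Hf := Hpsi c ltac:(apply/andP; split; lra).
    have -> : s = c + h' by rewrite /h' addrC subrK.
    rewrite /P.
    have Ef : f (c + h') - f a = (f (c + h') - f c - h' *: f' c) + (h' *: f' c + (f c - f a)).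
      by rewrite !addrA !subrK.
    rewrite Ef.
    apply: (le_trans (ler_normD _ _)).
    apply: (le_trans (lerD (lexx _) (ler_normD _ _))).
    rewrite normrZ gtr0_norm //.
    have := ler_wpM2l (ltW h'0) Hf.
    move: Pc; rewrite /P.
    nra.
  move=> /(sup_upper_bound supS); rewrite -/c; lra.
by move: Pc; rewrite /P cb'.
Qed.

Lemma cmp (A B a b : R) (f f' : R -> V) (phi psi : R -> R) :
  is_deriv_on A B f f' -> A <= a -> a <= b -> b <= B ->
  (forall t, a <= t < b -> `|f' t| <= psi t) ->
  (forall t h, a <= t < b -> 0 <= h -> t + h <= b -> psi t * h <= phi (t+h) - phi t) ->
  `|f b - f a| <= phi b - phi a.
Proof.
move=> D Aa ab bB Hpsi Hphi.
apply/ler_addgt0Pr => e e0.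
have ba1 : 0 < b - a + 1 by lra.
have := @cmp_aux A B a b f f' phi psi D Aa ab bB Hpsi Hphi _ (divr_gt0 e0 ba1).
have : e / (b - a + 1) * (b - a) <= e.
  rewrite mulrAC ler_pdivrMr // ler_wpM2l ?ltW //; lra.
lra.
Qed.
End S.

Lemma bin_le_exp n k : ('C(n, k) <= 2 ^ n)%N.
Proof.
elim: n k => [|n IH] [|k] //; first by rewrite bin0 expn_gt0.
by rewrite binS expnS mul2n -addnn leq_add.
Qed.

Lemma bernoulli_ineq (R : realType) (k : nat) (y h : R) : 0 <= y -> 0 <= h ->
  (k.+1)%:R * y ^+ k * h <= (y + h) ^+ k.+1 - y ^+ k.+1.
Proof.
move=> y0 h0; elim: k => [|k IH].
  by rewrite !expr1 expr0 !mul1r; lra.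
set Y := y ^+ k; set Z := (y + h) ^+ k.+1.
have Y0 : 0 <= Y by rewrite /Y exprn_ge0.
rewrite (exprS (y + h)) -/Z (exprS y) (exprS y) -/Y.
move: IH; rewrite -/Y -/Z exprS -/Y => IH.
have := ler_wpM2l (addr_ge0 y0 h0) IH.
have : 0 <= (k.+1)%:R * Y * h * h by rewrite !mulr_ge0.
have : 0 <= Y * y * h by rewrite !mulr_ge0.
have -> : (k.+2)%:R = (k.+1)%:R + 1 :> R by rewrite -addn1 natrD.
set K := (k.+1)%:R.
nra.
Qed.

Lemma vanish (R : realType) (x A : R) : 0 <= x ->
  (forall k : nat, 2 ^+ k * x <= A) -> x = 0.
Proof.
move=> x0 H; apply/eqP; rewrite eq_le x0 andbT leNgt; apply/negP => xp.
have A0 : 0 <= A by have := H 0%N; rewrite expr0 mul1r => h; lra.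
have := archi_boundP (divr_ge0 A0 x0).
set k := Num.Def.archi_bound _ => Hk.
have Hk2 : (k%:R : R) <= 2 ^+ k.
  by rewrite -natrX ler_nat ltnW // ltn_expl.
have := H k.
rewrite ltr_pdivrMr // in Hk.
have : (k%:R : R) * x <= 2 ^+ k * x by rewrite ler_wpM2r // ltW.
lra.
Qed.


Theorem mainTheorem15 (R : realType)
  (E : nat -> completeNormedModType R)
  (U : forall n : nat, R -> {linear E n -> E n})
  (L : forall n : nat, {linear E n.+1 -> E n})
  (C : R) (tstar r : R)
  (u u' : forall n : nat, R -> E n) :
  0 < C ->
  (forall n, (0 < n)%N -> sc_isometry_group (U n)) ->
  (forall n, (0 < n)%N -> forall x : E n.+1, `|L n x| <= C * n%:R * `|x|) ->
  0 < tstar ->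
  (forall n, (0 < n)%N -> is_C1_on 0 tstar (u n) (u' n)) ->
  (forall n, (0 < n)%N -> forall t, 0 <= t <= tstar ->
     u' n t = U n t (L n (U n.+1 (- t) (u n.+1 t)))) ->
  (forall n, (0 < n)%N -> u n 0 = 0) ->
  0 < r ->
  (forall n, (0 < n)%N -> forall t, 0 <= t <= tstar -> `|u n t| <= r ^+ n) ->
  forall n, (0 < n)%N -> forall t, 0 <= t <= tstar -> u n t = 0.
Proof.
move=> C0 HU HL t0 HC Hode Hu0 r0 Hbd.
set d := (2 * 2 * C * r)^-1.
have Cr0 : 0 < 2 * 2 * C * r by rewrite !mulr_gt0.
have d0 : 0 < d by rewrite invr_gt0.
have key : 2 * 2 * C * r * d = 1 by rewrite /d divff // gt_eqF.
have LL : forall s0, 0 <= s0 -> (forall n, (0 < n)%N -> u n s0 = 0) ->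
    forall t, s0 <= t <= tstar -> t - s0 <= d -> forall m, u m.+1 t = 0.
  move=> s0 s00 Hs0 t /andP[s0t ttstar] td.
  have Pk : forall k m s, s0 <= s <= t -> `|u m.+1 s| <=
      C ^+ k * r ^+ (m.+1 + k) * ('C(m + k, k))%:R * (s - s0) ^+ k.
    elim=> [|k IH] m s /andP[s0s st].
      rewrite !expr0 mul1r addn0 bin0 !mulr1.
      by apply: Hbd => //; apply/andP; split; lra.
    set K := C ^+ k.+1 * r ^+ (m.+1 + k.+1) * ('C(m + k.+1, k.+1))%:R.
    have K0 : 0 <= K by rewrite /K !mulr_ge0 // ?exprn_ge0 // ltW.
    have Hb : ('C(m + k.+1, k.+1) * k.+1 = m.+1 * 'C(m.+1 + k, k))%N.
      rewrite mulnC mul_bin_left addSn -addnS.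
      by congr (_ * _)%N; rewrite addnS subSn ?leq_addl // addnK.
    have HK : K * (k.+1)%:R = C * (m.+1)%:R * (C ^+ k * r ^+ (m.+2 + k) * ('C(m.+1 + k, k))%:R).
      rewrite /K -mulrA -natrM Hb natrM exprS addSnnS.
      have -> : (m + k.+2 = m.+2 + k)%N by rewrite !addnS !addSn.
      ring.
    have := @cmp R (E m.+1) 0 tstar s0 s (u m.+1) (u' m.+1)
      (fun x => K * (x - s0) ^+ k.+1) (fun x => K * (k.+1)%:R * (x - s0) ^+ k)
      (HC m.+1 isT).1 s00 s0s ltac:(lra).
    have -> : u m.+1 s0 = 0 by apply: Hs0.
    rewrite subr0 subrr expr0n /= mulr0 subr0; apply.
    - move=> x /andP[s0x xs].
      rewrite Hode //; last by apply/andP; split; lra.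
      have [_ _ Hiso _] := HU m.+1 isT; rewrite Hiso.
      apply: le_trans (HL m.+1 isT _) _.
      have [_ _ Hiso2 _] := HU m.+2 isT; rewrite Hiso2.
      have := IH m.+1 x ltac:(apply/andP; split; lra).
      move=> H; rewrite HK -[X in _ <= X]mulrA; apply: ler_wpM2l.
        by rewrite mulr_ge0 // ltW.
      by move: H; rewrite !mulrA.
    - move=> x h /andP[s0x xs] h0 xhs.
      rewrite /= -mulrBr -(mulrA (K * _)) -(mulrA K); apply: ler_wpM2l => //.
      rewrite (_ : x + h - s0 = (x - s0) + h); last by ring.
      rewrite mulrA; apply: bernoulli_ineq => //; lra.
  move=> m; apply/normr0_eq0.
  apply: (@vanish R _ (r ^+ m.+1 * 2 ^+ m)) => // k.
  have := Pk k m t ltac:(apply/andP; split; lra).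
  have e1 : ('C(m + k, k)%:R : R) <= 2 ^+ (m + k) by rewrite -natrX ler_nat bin_le_exp.
  have e2 : (t - s0) ^+ k <= d ^+ k by apply: lerXn2r; rewrite ?nnegrE; lra.
  have X0 : 0 <= C ^+ k * r ^+ (m.+1 + k) by rewrite mulr_ge0 // exprn_ge0 // ltW.
  have e3 : C ^+ k * r ^+ (m.+1 + k) * ('C(m + k, k))%:R * (t - s0) ^+ k <=
            C ^+ k * r ^+ (m.+1 + k) * 2 ^+ (m + k) * d ^+ k.
    apply: ler_pM.
    - by rewrite mulr_ge0.
    - by rewrite exprn_ge0 //; lra.
    - by apply: ler_wpM2l.
    - exact: e2.
  have e4 : 2 ^+ k * (C ^+ k * r ^+ (m.+1 + k) * 2 ^+ (m + k) * d ^+ k) = r ^+ m.+1 * 2 ^+ m.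
    transitivity (r ^+ m.+1 * 2 ^+ m * (2 * 2 * C * r * d) ^+ k); last first.
      by rewrite key expr1n mulr1.
    rewrite !exprMn !exprD; ring.
  move=> H1; rewrite -e4; apply: ler_wpM2l; first by rewrite exprn_ge0.
  exact: le_trans H1 e3.
have Z : forall j : nat, forall n t, 0 <= t <= tstar -> t <= j%:R * d -> u n.+1 t = 0.
  elim=> [|j IH] n t /andP[tt0 tts].
    rewrite mul0r => t0'; have -> : t = 0 by lra.
    exact: Hu0.
  move=> tj.
  have [tj'|tj'] := leP t (j%:R * d); first by apply: IH => //; apply/andP; split.
  have jd0 : 0 <= j%:R * d by rewrite mulr_ge0 // ltW.
  apply: (LL (j%:R * d)) => //.
  - by move=> [|n'] // _; apply: IH => //; apply/andP; split; lra.
  - by apply/andP; split; lra.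
  - by move: tj; rewrite -natr1 mulrDl mul1r; lra.
move=> [|n] // _ t ht.
apply: (Z (Num.Def.archi_bound (tstar / d))) => //.
have := archi_boundP (divr_ge0 (ltW t0) (ltW d0)).
rewrite ltr_pdivrMr // => H.
move: ht => /andP[_ ht]; lra.
Qed.
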